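(* Fix an integer $n\ge 1$, real numbers $c_1<c_2<\cdots<c_n$ and a real number $\epsilon$. On $\mathbb{R}^3$ with coordinates $(x,y,z)$ put $\rho=\sqrt{x^2+y^2}$, $r_j=\sqrt{x^2+y^2+(z-c_j)^2}$ and $$V_\epsilon=\frac{\epsilon}{2}+\frac12\sum_{j=1}^n\frac{1}{r_j},\qquad \alpha=-\frac12\sum_{j=1}^n\frac{x\,dy-y\,dx}{r_j\,(r_j-z+c_j)},$$ defined on $U=\mathbb{R}^3\setminus\{(0,0,z): z\ge c_1\}$. On $U\times S^1$, with $\varphi$ the angular coordinate on $S^1$, let $$g_\epsilon=\frac{1}{V_\epsilon}(d\varphi+\alpha)^2+V_\epsilon\,(dx^2+dy^2+dz^2),\qquad \omega_\epsilon=(d\varphi+\alpha)\wedge dz+V_\epsilon\,dx\wedge dy,$$ considered on the open subset $W$ of $U\times S^1$ where $V_\epsilon\neq 0$ and $\rho>0$. Define the complex-valued functions $$z_1=\prod_{j=1}^n\bigl(r_j-(z-c_j)\bigr)^{1/2}\,e^{-\frac{\epsilon}{2}z+\sqrt{-1}\,\varphi},\qquad z_2=x+\sqrt{-1}\,y,$$ and set $S=\sum_{j=1}^n\frac{r_j+z-c_j}{r_j}$. Then on $W$, $$g_\epsilon=\frac{1}{V_\epsilon}\frac{dz_1}{z_1}\frac{d\bar z_1}{\bar z_1}-\frac{S}{2V_\epsilon}\Bigl(\frac{dz_1}{z_1}\frac{d\bar z_2}{\bar z_2}+\frac{dz_2}{z_2}\frac{d\bar z_1}{\bar z_1}\Bigr)+\Bigl[V_\epsilon\rho^2+\frac{S^2}{4V_\epsilon}\Bigr]\frac{dz_2}{z_2}\frac{d\bar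 z_2}{\bar z_2},$$ $$\omega_\epsilon=\frac{\sqrt{-1}}{2}\Bigl(\frac{1}{V_\epsilon}\frac{dz_1}{z_1}\wedge\frac{d\bar z_1}{\bar z_1}-\frac{S}{2V_\epsilon}\Bigl(\frac{dz_1}{z_1}\wedge\frac{d\bar z_2}{\bar z_2}+\frac{dz_2}{z_2}\wedge\frac{d\bar z_1}{\bar z_1}\Bigr)+\Bigl[V_\epsilon\rho^2+\frac{S^2}{4V_\epsilon}\Bigr]\frac{dz_2}{z_2}\wedge\frac{d\bar z_2}{\bar z_2}\Bigr).$$
   Context: For $\epsilon>0$, $g_\epsilon$ is the (toric) multi-Taub-NUT metric; for $\epsilon=0$ it is the Gibbons–Hawking metric; for $\epsilon<0$ it is a Riemannian metric where $V_\epsilon>0$ and minus a Riemannian metric where $V_\epsilon<0$. The functions $z_1,z_2$ are holomorphic for the complex structure whose $(1,0)$-forms are spanned by $dx+\sqrt{-1}\,dy$ and $(d\varphi+\alpha)+\sqrt{-1}\,V_\epsilon\,dz$. In the formula for $g_\epsilon$, a product $ab$ of two (complex) $1$-forms denotes the symmetric product $\tfrac12(a\otimes b+b\otimes a)$, so that e.g. $(dx+\sqrt{-1}dy)(dx-\sqrt{-1}dy)=dx^2+dy^2$; $dx^2$ means $dx\,dx$. *)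

(* Defs.v *)
From Stdlib Require Import Reals.
From Coquelicot Require Import Coquelicot.
Open Scope R_scope.

(* finite sums / products over indices j = 0, ..., n-1 *)
Fixpoint rsum (n : nat) (f : nat -> R) : R :=
  match n with O => 0 | S k => rsum k f + f k end.
Fixpoint rprod (n : nat) (f : nat -> R) : R :=
  match n with O => 1 | S k => rprod k f * f k end.

Record TV := mkTV { tx : R; ty : R; tz : R; tphi : R }.

Definition dR (f : R -> R -> R -> R -> R) (x y z ph : R) (v : TV) : R :=
  Derive (fun t => f t y z ph) x * tx v + Derive (fun t => f x t z ph) y * ty v
  + Derive (fun t => f x y t ph) z * tz v + Derive (fun t => f x y z t) ph * tphi v.

Definition dC (F : R -> R -> R -> R -> C) (x y z ph : R) (v : TV) : C :=
  (dR (fun a b c d => fst (F a b c d)) x y z ph v,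
   dR (fun a b c d => snd (F a b c d)) x y z ph v).

Definition rho (x y : R) : R := sqrt (x ^ 2 + y ^ 2).
Definition rj (c : nat -> R) (j : nat) (x y z : R) : R :=
  sqrt (x ^ 2 + y ^ 2 + (z - c j) ^ 2).

Definition Veps (n : nat) (c : nat -> R) (eps x y z : R) : R :=
  eps / 2 + / 2 * rsum n (fun j => / rj c j x y z).

Definition alpha (n : nat) (c : nat -> R) (x y z : R) (v : TV) : R :=
  - / 2 * rsum n (fun j => (x * ty v - y * tx v)
                           / (rj c j x y z * (rj c j x y z - z + c j))).

Definition theta (n : nat) (c : nat -> R) (x y z : R) (v : TV) : R :=
  tphi v + alpha n c x y z v.

Definition Sfun (n : nat) (c : nat -> R) (x y z : R) : R :=
  rsum n (fun j => (rj c j x y z + z - c j) / rj c j x y z).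

Definition z1 (n : nat) (c : nat -> R) (eps : R) (x y z ph : R) : C :=
  Cmult (RtoC (rprod n (fun j => sqrt (rj c j x y z - (z - c j))) * exp (- (eps / 2) * z)))
        (cos ph, sin ph).
Definition z2 (x y z ph : R) : C := (x, y).

Definition symC (a b : TV -> C) (v w : TV) : C :=
  Cmult (RtoC (/ 2)) (Cplus (Cmult (a v) (b w)) (Cmult (a w) (b v))).
Definition wedgeC (a b : TV -> C) (v w : TV) : C :=
  Cminus (Cmult (a v) (b w)) (Cmult (a w) (b v)).

Definition g_eps (n : nat) (c : nat -> R) (eps x y z : R) (v w : TV) : R :=
  / Veps n c eps x y z * (theta n c x y z v * theta n c x y z w)
  + Veps n c eps x y z * (tx v * tx w + ty v * ty w + tz v * tz w).
Definition omega_eps (n : nat) (c : nat -> R) (eps x y z : R) (v w : TV) : R :=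
  (theta n c x y z v * tz w - theta n c x y z w * tz v)
  + Veps n c eps x y z * (tx v * ty w - tx w * ty v).

Definition RHS (prod : (TV -> C) -> (TV -> C) -> TV -> TV -> C)
  (n : nat) (c : nat -> R) (eps x y z ph : R) (v w : TV) : C :=
  let V := Veps n c eps x y z in
  let S := Sfun n c x y z in
  let A := fun u => Cdiv (dC (z1 n c eps) x y z ph u) (z1 n c eps x y z ph) in
  let B := fun u => Cdiv (dC z2 x y z ph u) (z2 x y z ph) in
  let Ab := fun u => Cconj (A u) in
  let Bb := fun u => Cconj (B u) in
  Cplus (Cminus (Cmult (RtoC (/ V)) (prod A Ab v w))
                (Cmult (RtoC (S / (2 * V))) (Cplus (prod A Bb v w) (prod B Ab v w))))
        (Cmult (RtoC (V * rho x y ^ 2 + S ^ 2 / (4 * V))) (prod B Bb v w)).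

(* Main.v *)
Require Import Defs.
From Stdlib Require Import Reals Lra Psatz.
From Coquelicot Require Import Coquelicot.
Open Scope R_scope.

Lemma is_derive_eq (f : R -> R) x l l' : l = l' -> is_derive f x l -> is_derive f x l'.
Proof. intros ->; auto. Qed.

Lemma rmult_der (f g : R -> R) x df dg :
  is_derive f x df -> is_derive g x dg ->
  is_derive (fun t => f t * g t) x (df * g x + f x * dg).
Proof. intros H1 H2. apply (is_derive_mult f g x df dg H1 H2). intros; apply Rmult_comm. Qed.

Lemma rprod_der (f : nat -> R -> R) (g : nat -> R) x k :
  (forall j, is_derive (f j) x (f j x * g j)) ->
  is_derive (fun t => rprod k (fun j => f j t)) x (rprod k (fun j => f j x) * rsum k g).
Proof.
  intros H. induction k as [|k IH]; simpl.
  - eapply is_derive_eq; [|apply is_derive_const]. rewrite Rmult_0_r; reflexivity.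
  - eapply is_derive_eq; cycle 1. apply rmult_der; [apply IH|apply H]. simpl. ring.
Qed.

Lemma rsum_scal n k (f : nat -> R) : rsum n (fun j => k * f j) = k * rsum n f.
Proof. induction n; simpl; [ring| rewrite IHn; ring]. Qed.

Lemma rsum_ext n (f g : nat -> R) : (forall j, f j = g j) -> rsum n f = rsum n g.
Proof. intros H; induction n; simpl; [ring| rewrite IHn, H; ring]. Qed.

Section Pt.
Variables (c : nat -> R) (x y z : R).
Hypothesis Hp : 0 < x ^ 2 + y ^ 2.

Lemma rj_sq j : rj c j x y z ^ 2 = x ^ 2 + y ^ 2 + (z - c j) ^ 2.
Proof. unfold rj. rewrite pow2_sqrt; [reflexivity|]. pose proof (pow2_ge_0 (z - c j)). lra. Qed.

Lemma rj_pos j : 0 < rj c j x y z.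
Proof. unfold rj. apply sqrt_lt_R0. pose proof (pow2_ge_0 (z - c j)). lra. Qed.

Lemma rj_gt j : 0 < rj c j x y z - (z - c j).
Proof. pose proof (rj_sq j). pose proof (rj_pos j). nra. Qed.
End Pt.
Section Pt2.
Variables (c : nat -> R) (x y z : R).
Hypothesis Hp : 0 < x ^ 2 + y ^ 2.

Lemma fx_der j : is_derive (fun t => sqrt (rj c j t y z - (z - c j))) x
  (sqrt (rj c j x y z - (z - c j)) * (/ 2 * x * / (rj c j x y z * (rj c j x y z - (z - c j))))).
Proof.
  pose proof (rj_pos c x y z Hp j) as H1. pose proof (rj_gt c x y z Hp j) as H2.
  pose proof (rj_sq c x y z Hp j) as H3.
  unfold rj in *. auto_derive.
  - split; [|split; [|exact I]]. pose proof (pow2_ge_0 (z - c j)). 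
    assert (0 < x * x + y * y) by nra. nra. exact H2.
  - replace (x * (x * 1) + y * (y * 1) + (z - c j) * ((z - c j) * 1)) with (x ^ 2 + y ^ 2 + (z - c j) ^ 2) by ring.
    set (s := sqrt (x ^ 2 + y ^ 2 + (z - c j) ^ 2)) in *.
    replace (s + - (z - c j)) with (s - (z - c j)) by ring.
    set (u := sqrt (s - (z - c j))).
    assert (Hu : u * u = s - (z - c j)) by (apply sqrt_sqrt; lra).
    assert (0 < u) by (apply sqrt_lt_R0; lra).
    rewrite <- Hu. field. lra.
Qed.

Lemma fy_der j : is_derive (fun t => sqrt (rj c j x t z - (z - c j))) y
  (sqrt (rj c j x y z - (z - c j)) * (/ 2 * y * / (rj c j x y z * (rj c j x y z - (z - c j))))).
Proof.
  pose proof (rj_pos c x y z Hp j) as H1. pose proof (rj_gt c x y z Hp j) as H2.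
  pose proof (rj_sq c x y z Hp j) as H3.
  unfold rj in *. auto_derive.
  - split; [|split; [|exact I]]. pose proof (pow2_ge_0 (z - c j)). 
    assert (0 < x * x + y * y) by nra. nra. exact H2.
  - replace (x * (x * 1) + y * (y * 1) + (z - c j) * ((z - c j) * 1)) with (x ^ 2 + y ^ 2 + (z - c j) ^ 2) by ring.
    set (s := sqrt (x ^ 2 + y ^ 2 + (z - c j) ^ 2)) in *.
    replace (s + - (z - c j)) with (s - (z - c j)) by ring.
    set (u := sqrt (s - (z - c j))).
    assert (Hu : u * u = s - (z - c j)) by (apply sqrt_sqrt; lra).
    assert (0 < u) by (apply sqrt_lt_R0; lra).
    rewrite <- Hu. field. lra.
Qed.

Lemma fz_der j : is_derive (fun t => sqrt (rj c j x y t - (t - c j))) z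
  (sqrt (rj c j x y z - (z - c j)) * (- / 2 * / rj c j x y z)).
Proof.
  pose proof (rj_pos c x y z Hp j) as H1. pose proof (rj_gt c x y z Hp j) as H2.
  pose proof (rj_sq c x y z Hp j) as H3.
  unfold rj in *. auto_derive.
  - split; [|split; [|exact I]]. pose proof (pow2_ge_0 (z - c j)). 
    assert (0 < x * x + y * y) by nra. nra. exact H2.
  - replace (z + - c j) with (z - c j) by ring.
    replace (x * (x * 1) + y * (y * 1) + (z - c j) * ((z - c j) * 1)) with (x ^ 2 + y ^ 2 + (z - c j) ^ 2) by ring.
    set (s := sqrt (x ^ 2 + y ^ 2 + (z - c j) ^ 2)) in *.
    replace (s + - (z - c j)) with (s - (z - c j)) by ring.
    set (u := sqrt (s - (z - c j))).
    assert (Hu : u * u = s - (z - c j)) by (apply sqrt_sqrt; lra).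
    assert (0 < u) by (apply sqrt_lt_R0; lra).
    apply (Rmult_eq_reg_r u); [|lra].
    replace (u * (- / 2 * / s) * u) with ((u*u) * (- / 2 * / s)) by ring.
    rewrite Hu. field. split; lra.
Qed.
End Pt2.
Definition Tf n c x y z := rsum n (fun j => / (rj c j x y z * (rj c j x y z - (z - c j)))).
Definition Pr n c x y z := rprod n (fun j => sqrt (rj c j x y z - (z - c j))).

Lemma Cdiv_rot Q D tp co si : Q <> 0 -> co ^ 2 + si ^ 2 = 1 ->
  Cdiv (Q * D * co - Q * tp * si, Q * D * si + Q * tp * co) (Q * co, Q * si) = (D, tp).
Proof.
  intros HQ Hcs. unfold Cdiv, Cmult, Cinv. simpl.
  replace (Q * co * (Q * co * 1) + Q * si * (Q * si * 1)) with (Q ^ 2)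
    by (transitivity (Q ^ 2 * (co ^ 2 + si ^ 2)); [rewrite Hcs; ring | simpl; ring]).
  apply injective_projections; simpl.
  - transitivity (D * (co ^ 2 + si ^ 2)); [field; auto | rewrite Hcs; ring].
  - transitivity (tp * (co ^ 2 + si ^ 2)); [field; auto | rewrite Hcs; ring].
Qed.

Section Pt3.
Variables (n : nat) (c : nat -> R) (eps x y z ph : R).
Hypothesis Hp : 0 < x ^ 2 + y ^ 2.

Lemma Prx : is_derive (fun t => Pr n c t y z) x (Pr n c x y z * (/ 2 * x * Tf n c x y z)).
Proof.
  unfold Pr. eapply is_derive_eq; cycle 1.
  apply (rprod_der (fun j t => sqrt (rj c j t y z - (z - c j)))
          (fun j => / 2 * x * / (rj c j x y z * (rj c j x y z - (z - c j))))).
  intro j. apply fx_der; auto.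
  unfold Tf. rewrite rsum_scal. reflexivity.
Qed.

Lemma Pry : is_derive (fun t => Pr n c x t z) y (Pr n c x y z * (/ 2 * y * Tf n c x y z)).
Proof.
  unfold Pr. eapply is_derive_eq; cycle 1.
  apply (rprod_der (fun j t => sqrt (rj c j x t z - (z - c j)))
          (fun j => / 2 * y * / (rj c j x y z * (rj c j x y z - (z - c j))))).
  intro j. apply fy_der; auto.
  unfold Tf. rewrite rsum_scal. reflexivity.
Qed.

Lemma Prz : is_derive (fun t => Pr n c x y t) z
   (Pr n c x y z * (- / 2 * rsum n (fun j => / rj c j x y z))).
Proof.
  unfold Pr. eapply is_derive_eq; cycle 1.
  apply (rprod_der (fun j t => sqrt (rj c j x y t - (t - c j)))
          (fun j => - / 2 * / rj c j x y z)).
  intro j. apply fz_der; auto.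
  rewrite rsum_scal. reflexivity.
Qed.

Let E := exp (- (eps / 2) * z).

Lemma D1x : Derive (fun t => fst (z1 n c eps t y z ph)) x
  = Pr n c x y z * (/ 2 * x * Tf n c x y z) * E * cos ph.
Proof.
  apply is_derive_unique.
  apply (is_derive_ext (fun t => (E * cos ph) * Pr n c t y z)).
  { intro t. unfold z1, Pr, E. simpl. ring. }
  eapply is_derive_eq; cycle 1; [apply is_derive_scal, Prx | simpl; ring].
Qed.
Lemma D2x : Derive (fun t => snd (z1 n c eps t y z ph)) x
  = Pr n c x y z * (/ 2 * x * Tf n c x y z) * E * sin ph.
Proof.
  apply is_derive_unique.
  apply (is_derive_ext (fun t => (E * sin ph) * Pr n c t y z)).
  { intro t. unfold z1, Pr, E. simpl. ring. }
  eapply is_derive_eq; cycle 1; [apply is_derive_scal, Prx | simpl; ring].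
Qed.
Lemma D1y : Derive (fun t => fst (z1 n c eps x t z ph)) y
  = Pr n c x y z * (/ 2 * y * Tf n c x y z) * E * cos ph.
Proof.
  apply is_derive_unique.
  apply (is_derive_ext (fun t => (E * cos ph) * Pr n c x t z)).
  { intro t. unfold z1, Pr, E. simpl. ring. }
  eapply is_derive_eq; cycle 1; [apply is_derive_scal, Pry | simpl; ring].
Qed.
Lemma D2y : Derive (fun t => snd (z1 n c eps x t z ph)) y
  = Pr n c x y z * (/ 2 * y * Tf n c x y z) * E * sin ph.
Proof.
  apply is_derive_unique.
  apply (is_derive_ext (fun t => (E * sin ph) * Pr n c x t z)).
  { intro t. unfold z1, Pr, E. simpl. ring. }
  eapply is_derive_eq; cycle 1; [apply is_derive_scal, Pry | simpl; ring].
Qed.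

Lemma Ez : is_derive (fun t => exp (- (eps / 2) * t)) z (E * (- (eps / 2))).
Proof. unfold E. auto_derive; auto. ring. Qed.

Lemma D1z : Derive (fun t => fst (z1 n c eps x y t ph)) z
  = (Pr n c x y z * (- / 2 * rsum n (fun j => / rj c j x y z)) * E
     + Pr n c x y z * (E * (- (eps / 2)))) * cos ph.
Proof.
  apply is_derive_unique.
  apply (is_derive_ext (fun t => cos ph * (Pr n c x y t * exp (- (eps / 2) * t)))).
  { intro t. unfold z1, Pr. simpl. ring. }
  eapply is_derive_eq; cycle 1; [apply is_derive_scal, rmult_der; [apply Prz | apply Ez] | unfold E; simpl; ring].
Qed.
Lemma D2z : Derive (fun t => snd (z1 n c eps x y t ph)) z
  = (Pr n c x y z * (- / 2 * rsum n (fun j => / rj c j x y z)) * E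
     + Pr n c x y z * (E * (- (eps / 2)))) * sin ph.
Proof.
  apply is_derive_unique.
  apply (is_derive_ext (fun t => sin ph * (Pr n c x y t * exp (- (eps / 2) * t)))).
  { intro t. unfold z1, Pr. simpl. ring. }
  eapply is_derive_eq; cycle 1; [apply is_derive_scal, rmult_der; [apply Prz | apply Ez] | unfold E; simpl; ring].
Qed.
Lemma D1p : Derive (fun t => fst (z1 n c eps x y z t)) ph
  = - (Pr n c x y z * E) * sin ph.
Proof.
  apply is_derive_unique. unfold z1, Pr, E. simpl. auto_derive; auto. ring.
Qed.
Lemma D2p : Derive (fun t => snd (z1 n c eps x y z t)) ph
  = (Pr n c x y z * E) * cos ph.
Proof.
  apply is_derive_unique. unfold z1, Pr, E. simpl. auto_derive; auto. ring.
Qed.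

Lemma Pr_pos : 0 < Pr n c x y z.
Proof.
  unfold Pr. induction n as [|k IH]; simpl; [lra|].
  apply Rmult_lt_0_compat; [|apply sqrt_lt_R0, rj_gt]; auto.
Abort.

End Pt3.
Lemma Pr_pos n c x y z : 0 < x ^ 2 + y ^ 2 -> 0 < Pr n c x y z.
Proof.
  intro Hp. unfold Pr. induction n as [|k IH]; simpl; [lra|].
  apply Rmult_lt_0_compat; [auto|apply sqrt_lt_R0, rj_gt; auto].
Qed.

Lemma dz1 n c eps x y z ph u : 0 < x ^ 2 + y ^ 2 ->
  Cdiv (dC (z1 n c eps) x y z ph u) (z1 n c eps x y z ph)
  = (/ 2 * x * Tf n c x y z * tx u + / 2 * y * Tf n c x y z * ty u
     - Veps n c eps x y z * tz u, tphi u).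
Proof.
  intro Hp. unfold dC, dR. cbv beta.
  rewrite (D1x n c eps x y z ph Hp), (D1y n c eps x y z ph Hp), (D1z n c eps x y z ph Hp),
    (D1p n c eps x y z ph), (D2x n c eps x y z ph Hp), (D2y n c eps x y z ph Hp),
    (D2z n c eps x y z ph Hp), (D2p n c eps x y z ph).
  pose proof (Pr_pos n c x y z Hp). pose proof (exp_pos (- (eps / 2) * z)).
  set (Q := Pr n c x y z * exp (- (eps / 2) * z)).
  set (D := / 2 * x * Tf n c x y z * tx u + / 2 * y * Tf n c x y z * ty u
     - Veps n c eps x y z * tz u).
  rewrite <- (Cdiv_rot Q D (tphi u) (cos ph) (sin ph)).
  2: { unfold Q. apply Rgt_not_eq, Rmult_lt_0_compat; auto. }
  2: { rewrite Rplus_comm. pose proof (sin2_cos2 ph). unfold Rsqr in *. nra. }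
  f_equal.
  - apply injective_projections; simpl; unfold D, Q, Veps; field.
  - unfold z1, Q, Pr. apply injective_projections; simpl; ring.
Qed.

Lemma dz2 x y z ph u : dC z2 x y z ph u = (tx u, ty u).
Proof.
  unfold dC, dR, z2. simpl.
  rewrite Derive_const, Derive_const, Derive_const, Derive_const, Derive_const, Derive_const.
  replace (Derive (fun t => t) x) with 1 by (symmetry; apply Derive_id).
  replace (Derive (fun t => t) y) with 1 by (symmetry; apply Derive_id).
  apply injective_projections; simpl; ring.
Qed.
Lemma S_eq n c x y z : 0 < x ^ 2 + y ^ 2 ->
  Sfun n c x y z = (x ^ 2 + y ^ 2) * Tf n c x y z.
Proof.
  intro Hp. unfold Sfun, Tf. rewrite <- rsum_scal. apply rsum_ext. intro j.
  pose proof (rj_sq c x y z Hp j). pose proof (rj_pos c x y z Hp j).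
  pose proof (rj_gt c x y z Hp j).
  set (r := rj c j x y z) in *.
  field_simplify_eq; try lra; try nra.
Qed.

Lemma alpha_eq n c x y z v :
  alpha n c x y z v = - / 2 * (x * ty v - y * tx v) * Tf n c x y z.
Proof.
  unfold alpha, Tf. rewrite Rmult_assoc. f_equal.
  rewrite <- rsum_scal. apply rsum_ext. intro j.
  replace (rj c j x y z - z + c j) with (rj c j x y z - (z - c j)) by ring. reflexivity.
Qed.

Theorem mainTheorem1 :
  forall (n : nat) (c : nat -> R) (eps : R),
    (1 <= n)%nat ->
    (forall i j : nat, (i < j < n)%nat -> c i < c j) ->
    forall x y z ph : R,
      Veps n c eps x y z <> 0 -> 0 < rho x y ->
      forall v w : TV,
        RtoC (g_eps n c eps x y z v w) = RHS symC n c eps x y z ph v w /\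
        RtoC (omega_eps n c eps x y z v w)
          = Cmult (Cmult Ci (RtoC (/ 2))) (RHS wedgeC n c eps x y z ph v w).
Proof.
  intros n c eps _ _ x y z ph HV Hrho v w.
  assert (Hp : 0 < x ^ 2 + y ^ 2).
  { destruct (Rlt_or_le 0 (x ^ 2 + y ^ 2)) as [h|h]; auto.
    unfold rho in Hrho. rewrite sqrt_neg_0 in Hrho; lra. }
  assert (Hr : rho x y ^ 2 = x ^ 2 + y ^ 2).
  { unfold rho. apply pow2_sqrt. lra. }
  unfold RHS, symC, wedgeC. cbv beta zeta.
  rewrite !(fun u => dz1 n c eps x y z ph u Hp), !dz2, Hr, (S_eq n c x y z Hp).
  unfold g_eps, omega_eps, theta. rewrite !alpha_eq.
  set (T := Tf n c x y z) in *. set (V := Veps n c eps x y z) in *.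
  unfold z2.
  assert (Hp' : x * (x * 1) + y * (y * 1) <> 0) by nra.
  split; apply injective_projections; unfold Cdiv, Cmult, Cinv, Cminus, Cplus, Cconj, Copp, RtoC, Ci;
    simpl; (field; split; [nra | exact HV]).
Qed.
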